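(* Let $R\in\mathbb{R}[x]$, $\delta\in\mathbb{R}$, and $Q=R\circ x^2\circ(x-\delta)$, with $n=\deg Q$. 1) If $n\ge6$ and $Ch_2(Q)=Ch_3(Q)=0$, then $4\delta$ is not an algebraic integer unless $\delta=0$. 2) If $n\ge9$ and $Ch_2(Q)=Ch_4(Q)=Ch_5(Q)=0$, then $4\delta$ is not an algebraic integer unless $\delta=0$.
   Context: $T_k$ denotes the Chebyshev polynomial of the first kind of degree $k$, $T_k(\cos\phi)=\cos(k\phi)$. Every real polynomial $Q$ of degree $n$ can be uniquely written as $Q=\sum_{k=0}^n d_kT_k$ with $d_k\in\mathbb{R}$; set $Ch_i(Q)=d_{n-i}$ for $0\le i\le n$. An algebraic integer is a complex root of a monic polynomial with integer coefficients. $Q(x)=R((x-\delta)^2)$. *)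

(* Defs.v *)
From HB Require Import structures.
From mathcomp Require Import all_boot all_order all_algebra.
Set Implicit Arguments. Unset Strict Implicit. Unset Printing Implicit Defensive.
Import Order.TTheory GRing.Theory Num.Theory.
Local Open Scope ring_scope.

(* Chebyshev polynomials of the first kind: T_0 = 1, T_1 = X,
   T_(k+2) = 2 X T_(k+1) - T_k  (equivalently T_k(cos t) = cos(k t)). *)
Fixpoint chebT_pair (R : nzRingType) (k : nat) : {poly R} * {poly R} :=
  match k with
  | 0 => (1, 'X)
  | k'.+1 => let: (a, b) := chebT_pair R k' in (b, 'X *+ 2 * b - a)
  end.

Definition chebT (R : nzRingType) (k : nat) : {poly R} := (chebT_pair R k).1.

Definition cheb_coords (R : nzRingType) (Q : {poly R}) (d : nat -> R) : Prop :=
  Q = \sum_(k < (size Q).-1.+1) d k *: chebT R k.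

(* Ch_i(Q) = 0, i.e. d_(n-i) = 0 where n = deg Q. Since the Chebyshev
   expansion is unique, this is stated via the coordinate sequence. *)
Definition Ch_zero (R : nzRingType) (Q : {poly R}) (is_ : seq nat) : Prop :=
  exists d : nat -> R, cheb_coords Q d /\
    forall i, i \in is_ -> d ((size Q).-1 - i)%N = 0.

Definition is_algint (R : nzRingType) (x : R) : Prop :=
  exists p : {poly int}, p \is monic /\ root (map_poly intr p) x.

(* Main.v *)
Require Import Defs.
From HB Require Import structures.
From mathcomp Require Import all_boot all_order all_algebra.
From mathcomp Require Import ring lra zify.
Set Implicit Arguments. Unset Strict Implicit. Unset Printing Implicit Defensive.
Import Order.TTheory GRing.Theory Num.Theory.
Local Open Scope ring_scope.


Section Cheb.
Variable F : realFieldType.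
Notation T := (chebT F).

Lemma chebT_pairE k : chebT_pair F k = (T k, T k.+1).
Proof.
elim: k => [//|k IH]; by rewrite /chebT /= IH.
Qed.

Lemma chebT_rec k : T k.+2 = 'X *+ 2 * T k.+1 - T k.
Proof. by rewrite {1}/chebT /= chebT_pairE. Qed.

Lemma chebT_coef0 k : (T k.+2)`_0 = - (T k)`_0.
Proof. by rewrite chebT_rec coefB mulrnAl coefMn coefXM /= mul0rn sub0r. Qed.

Lemma chebT_coefS k i : (T k.+2)`_i.+1 = 2 * (T k.+1)`_i - (T k)`_i.+1.
Proof. by rewrite chebT_rec coefB (mulrnAl (R:={poly F})) coefMn coefXM /= mulr_natl. Qed.

Lemma chebT0 : T 0 = 1. Proof. by []. Qed.
Lemma chebT1 : T 1 = 'X. Proof. by []. Qed.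

Lemma chebT_big k i : (k < i)%N -> (T k)`_i = 0.
Proof.
elim: k {-2}k (leqnn k) i => [|N IH] k hk i hi.
  by case: k hk hi => // _; rewrite chebT0 coefC; case: i.
case: k hk hi => [|[|k]] hk hi.
- by rewrite chebT0 coefC; case: i hi.
- by rewrite chebT1 coefX; case: i hi => [|[|]].
case: i hi => // i hi.
rewrite chebT_coefS !IH ?subrr ?mulr0 ?subr0 //. all: lia.
Qed.

Lemma chebT_par k i : odd (k + i) -> (T k)`_i = 0.
Proof.
elim: k {-2}k (leqnn k) i => [|N IH] k hk i hi.
  by case: k hk hi => // _; rewrite chebT0 coefC; case: i.
case: k hk hi => [|[|k]] hk hi.
- by rewrite chebT0 coefC; case: i hi.
- by rewrite chebT1 coefX; case: i hi => [|[|]].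
case: i hi => [|i] hi.
  by rewrite chebT_coef0 IH ?oppr0 //; [lia | move: hi; rewrite !addn0 /= ?negbK].
rewrite chebT_coefS !IH ?subrr ?mulr0 ?subr0 //; try lia; move: hi; rewrite ?addnS ?addSn /= ?negbK //.
Qed.

Lemma cheb_c0 k : (T k.+1)`_k.+1 = 2 ^+ k.
Proof.
elim: k => [|k IH]; first by rewrite chebT1 coefX.
by rewrite chebT_coefS IH chebT_big // subr0 exprS.
Qed.

Lemma cheb_c2 k : 2 * (T k.+2)`_k = - (k.+2)%:R * 2 ^+ k.
Proof.
elim: k => [|k IH]; first by rewrite chebT_coef0 chebT0 coefC /= expr0; ring.
rewrite chebT_coefS cheb_c0 exprS.
have -> : (k.+3)%:R = (k.+2)%:R + 1 :> F by rewrite -natr1.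
lra.
Qed.

Lemma cheb_c4 k : 4 * (T k.+4)`_k = (k.+4)%:R * (k.+1)%:R * 2 ^+ k.
Proof.
elim: k => [|k IH].
  by rewrite chebT_coef0 chebT_coef0 chebT0 coefC /= expr0; ring.
rewrite chebT_coefS exprS.
have := cheb_c2 k.+1.
rewrite -!natr1 exprS.
move: IH; rewrite -!natr1.
move=> IH h.
set a := (T k.+4)`_k in IH *.
set b := (T k.+3)`_k.+1 in h *.
lra.

Qed.

Lemma c2d k : (T k.+2)`_k = - (k.+2)%:R * 2 ^+ k / 2.
Proof. have h := cheb_c2 k. by rewrite -h; field. Qed.
Lemma c4d k : (T k.+4)`_k = (k.+4)%:R * (k.+1)%:R * 2 ^+ k / 4.
Proof. have h := cheb_c4 k. by rewrite -h; field. Qed.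
Lemma po1 k : (T k.+1)`_k = 0.
Proof. by rewrite chebT_par // addSn addnn /= odd_double. Qed.
Lemma po3 k : (T k.+3)`_k = 0.
Proof. by rewrite chebT_par // !addSn addnn /= odd_double. Qed.
Lemma po5 k : (T k.+4.+1)`_k = 0.
Proof. by rewrite chebT_par // !addSn addnn /= odd_double. Qed.
Lemma pb k l : (k < l)%N -> (T k)`_l = 0.
Proof. exact: chebT_big. Qed.
End Cheb.


Section ChebQ.
Variables (F : realFieldType) (Q : {poly F}) (d : nat -> F) (nn : nat).
Hypotheses (hQ : Q = \sum_(k < nn.+4.+3) d k *: chebT F k).
Notation T := (chebT F).
Let u := (nn%:R : F).
Let P := (2 ^+ nn : F).

Lemma Qcheb l : (nn < l)%N -> Q`_l = d (nn.+4.+2) * (T (nn.+4.+2))`_l + d (nn.+4.+1) * (T (nn.+4.+1))`_l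
  + d (nn.+4) * (T (nn.+4))`_l + d (nn.+3) * (T (nn.+3))`_l + d (nn.+2) * (T (nn.+2))`_l + d (nn.+1) * (T (nn.+1))`_l.
Proof.
move=> hl; rewrite hQ coef_sum.
do 6 rewrite big_ord_recr /=.
rewrite big1 ?add0r ?coefZ; last first.
  by move=> i _; rewrite coefZ pb ?mulr0 //; have := ltn_ord i; lia.
by rewrite ?coefZ; ring.
Qed.

Ltac fin := rewrite /u /P ?exprS -?natr1; field; try done.

Ltac z K L := rewrite (@pb F K L); last lia.

Lemma C6 : Q`_(nn.+4.+2) = d (nn.+4.+2) * (32 * P).
Proof.
rewrite Qcheb; last lia.
rewrite cheb_c0; z nn.+4.+1 nn.+4.+2; z nn.+4 nn.+4.+2; z nn.+3 nn.+4.+2; z nn.+2 nn.+4.+2; z nn.+1 nn.+4.+2.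
fin.
Qed.
Lemma C5 : Q`_(nn.+4.+1) = d (nn.+4.+1) * (16 * P).
Proof.
rewrite Qcheb; last lia.
rewrite cheb_c0 po1; z nn.+4 nn.+4.+1; z nn.+3 nn.+4.+1; z nn.+2 nn.+4.+1; z nn.+1 nn.+4.+1.
fin.
Qed.
Lemma C4 : Q`_(nn.+4) = d (nn.+4.+2) * (- (u + 6) * 8 * P) + d (nn.+4) * (8 * P).
Proof.
rewrite Qcheb; last lia.
rewrite cheb_c0 po1 c2d; z nn.+3 nn.+4; z nn.+2 nn.+4; z nn.+1 nn.+4.
fin.
Qed.
Lemma C3 : Q`_(nn.+3) = d (nn.+4.+1) * (- (u + 5) * 4 * P) + d (nn.+3) * (4 * P).
Proof.
rewrite Qcheb; last lia.
rewrite cheb_c0 po1 c2d po3; z nn.+2 nn.+3; z nn.+1 nn.+3.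
fin.
Qed.
Lemma C2 : Q`_(nn.+2) = d (nn.+4.+2) * ((u + 6) * (u + 3) * P) + d (nn.+4) * (- (u + 4) * 2 * P) + d (nn.+2) * (2 * P).
Proof.
rewrite Qcheb; last lia.
rewrite cheb_c0 po1 c2d po3 c4d; z nn.+1 nn.+2.
fin.
Qed.
Lemma C1 : Q`_(nn.+1) = d (nn.+4.+1) * ((u + 5) * (u + 2) * P / 2) + d (nn.+3) * (- (u + 3) * P) + d (nn.+1) * P.
Proof.
rewrite Qcheb; last lia.
rewrite cheb_c0 po1 c2d po3 c4d po5.
fin.
Qed.
End ChebQ.

Lemma coefXsubCn (F : realFieldType) (c : F) n l :
  (('X - c%:P)^+n)`_l = 'C(n,l)%:R * (-c)^+(n-l).
Proof.
rewrite addrC -polyCN exprDn coef_sum.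
under eq_bigr => i _ do rewrite coefMn -rmorphXn coefCM coefXn mulr_natr mulrb eq_sym.
rewrite (eq_bigr (fun i : 'I_n.+1 => if (i:nat) == l then (-c)^+(n-l) *+ 'C(n,l) else 0)); last first.
  by move=> i _; case: eqP => [->|]; rewrite ?mul0rn.
rewrite -big_mkcond (big_ord1_eq _ (fun _ => (-c)^+(n-l) *+ 'C(n,l))).
case: ltnP => hl; first by rewrite mulr_natl.
by rewrite bin_small ?mul0r //; lia.
Qed.

Lemma Qtop (F : realFieldType) (R : {poly F}) c mm nn l : size R = mm.+4 -> nn = mm.*2 -> (nn < l)%N ->
 (R \Po (('X - c%:P)^+2))`_l = R`_(mm.+3) * (('X - c%:P)^+(nn.+4.+2))`_l
   + R`_(mm.+2) * (('X - c%:P)^+(nn.+4))`_l + R`_(mm.+1) * (('X - c%:P)^+(nn.+2))`_l.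
Proof.
move=> hs -> hl; rewrite coef_comp_poly hs big_ord_recr big_ord_recr big_ord_recr /=.
rewrite big1 ?add0r; last first.
  move=> i _; rewrite -exprM coefXsubCn bin_small ?mul0r ?mulr0 //.
  have := ltn_ord i; lia.
rewrite -!exprM !mul2n !doubleS; ring.
Qed.

Lemma nbinS m j : ('C(m + j.+1, m) * j.+1 = (m + j.+1) * 'C(m + j, m))%N.
Proof.
have := mul_bin_down (m + j.+1) m.
rewrite addnS /= -addnS (_ : (m + j.+1 - m = j.+1)%N); last lia.
by move=> ->; rewrite mulnC.
Qed.

Lemma coefX' (F : realFieldType) (c : F) m j :
  (('X - c%:P)^+(m + j))`_m = 'C(m + j, m)%:R * (-c)^+j.
Proof. by rewrite coefXsubCn addKn. Qed.

Section B.
Variable F : realFieldType.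
Lemma binF1 m : 'C(m + 1, m)%:R = (m%:R + 1 : F).
Proof. by rewrite addn1 binSn natr1. Qed.
Lemma binF2 m : 'C(m + 2, m)%:R * 2 = ((m%:R + 1) * (m%:R + 2) : F).
Proof.
have := congr1 (fun x => x%:R : F) (nbinS m 1).
by rewrite !natrM => ->; rewrite binF1 natrD; ring.
Qed.
Lemma binF3 m : 'C(m + 3, m)%:R * 6 = ((m%:R + 1) * (m%:R + 2) * (m%:R + 3) : F).
Proof.
have := congr1 (fun x => x%:R : F) (nbinS m 2); rewrite !natrM => h.
have -> : 'C(m + 3, m)%:R * 6 = ('C(m + 3, m)%:R * 3) * 2 :> F by ring.
by rewrite h -mulrA binF2 natrD; ring.
Qed.
Lemma binF4 m : 'C(m + 4, m)%:R * 24 = ((m%:R + 1) * (m%:R + 2) * (m%:R + 3) * (m%:R + 4) : F).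
Proof.
have := congr1 (fun x => x%:R : F) (nbinS m 3); rewrite !natrM => h.
have -> : 'C(m + 4, m)%:R * 24 = ('C(m + 4, m)%:R * 4) * 6 :> F by ring.
by rewrite h -mulrA binF3 natrD; ring.
Qed.
Lemma binF5 m : 'C(m + 5, m)%:R * 120 = ((m%:R + 1) * (m%:R + 2) * (m%:R + 3) * (m%:R + 4) * (m%:R + 5) : F).
Proof.
have := congr1 (fun x => x%:R : F) (nbinS m 4); rewrite !natrM => h.
have -> : 'C(m + 5, m)%:R * 120 = ('C(m + 5, m)%:R * 5) * 24 :> F by ring.
by rewrite h -mulrA binF4 natrD; ring.
Qed.
Lemma binF2d m : 'C(m + 2, m)%:R = ((m%:R + 1) * (m%:R + 2) / 2 : F).
Proof. by rewrite -binF2; field. Qed.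
Lemma binF3d m : 'C(m + 3, m)%:R = ((m%:R + 1) * (m%:R + 2) * (m%:R + 3) / 6 : F).
Proof. by rewrite -binF3; field. Qed.
Lemma binF4d m : 'C(m + 4, m)%:R = ((m%:R + 1) * (m%:R + 2) * (m%:R + 3) * (m%:R + 4) / 24 : F).
Proof. by rewrite -binF4; field. Qed.
Lemma binF5d m : 'C(m + 5, m)%:R = ((m%:R + 1) * (m%:R + 2) * (m%:R + 3) * (m%:R + 4) * (m%:R + 5) / 120 : F).
Proof. by rewrite -binF5; field. Qed.

Lemma cz (c : F) A B : (A < B)%N -> (('X - c%:P)^+A)`_B = 0.
Proof. by move=> h; rewrite coefXsubCn bin_small ?mul0r. Qed.
Lemma cj (c : F) A B j : A = (B + j)%N -> (('X - c%:P)^+A)`_B = 'C(B + j, B)%:R * (-c)^+j.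
Proof. by move=> ->; rewrite coefX'. Qed.
End B.

Section Pow.
Variables (F : realFieldType) (R : {poly F}) (c : F) (mm nn : nat).
Hypotheses (hs : size R = mm.+4) (hn : nn = mm.*2).
Let Q := R \Po (('X - c%:P)^+2).
Let a := R`_(mm.+3).
Let b := R`_(mm.+2).
Let e := R`_(mm.+1).
Let u := (nn%:R : F).

Ltac fin := rewrite -?natr1 /u /a /b /e; field; try done.

Lemma P6 : Q`_(nn.+4.+2) = a.
Proof.
rewrite /Q (Qtop c hs hn); last lia.
rewrite (cz c (A := nn.+4)); last lia.
rewrite (cz c (A := nn.+2)); last lia.
rewrite (cj c (A := nn.+4.+2) (j := 0)); last lia.
by rewrite addn0 binn expr0 !mulr0 !addr0 !mulr1.
Qed.
Lemma P5 : Q`_(nn.+4.+1) = a * (u + 6) * (- c).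
Proof.
rewrite /Q (Qtop c hs hn); last lia.
rewrite (cz c (A := nn.+4)); last lia.
rewrite (cz c (A := nn.+2)); last lia.
rewrite (cj c (A := nn.+4.+2) (j := 1)); last lia.
rewrite binF1; fin.
Qed.
Lemma P4 : Q`_(nn.+4) * 2 = a * (u + 5) * (u + 6) * c ^+ 2 + 2 * b.
Proof.
rewrite /Q (Qtop c hs hn); last lia.
rewrite (cz c (A := nn.+2)); last lia.
rewrite (cj c (A := nn.+4.+2) (j := 2)); last lia.
rewrite (cj c (A := nn.+4) (j := 0)); last lia.
rewrite binF2d addn0 binn; fin.
Qed.
Lemma P3 : Q`_(nn.+3) * 6 = a * (u + 4) * (u + 5) * (u + 6) * (- c) ^+ 3 + 6 * b * (u + 4) * (- c).
Proof.
rewrite /Q (Qtop c hs hn); last lia.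
rewrite (cz c (A := nn.+2)); last lia.
rewrite (cj c (A := nn.+4.+2) (j := 3)); last lia.
rewrite (cj c (A := nn.+4) (j := 1)); last lia.
rewrite binF3d binF1; fin.
Qed.
Lemma P2 : Q`_(nn.+2) * 24 = a * (u + 3) * (u + 4) * (u + 5) * (u + 6) * c ^+ 4 + 12 * b * (u + 3) * (u + 4) * c ^+ 2 + 24 * e.
Proof.
rewrite /Q (Qtop c hs hn); last lia.
rewrite (cj c (A := nn.+4.+2) (j := 4)); last lia.
rewrite (cj c (A := nn.+4) (j := 2)); last lia.
rewrite (cj c (A := nn.+2) (j := 0)); last lia.
rewrite binF4d binF2d addn0 binn; fin.
Qed.
Lemma P1 : Q`_(nn.+1) * 120 = a * (u + 2) * (u + 3) * (u + 4) * (u + 5) * (u + 6) * (- c) ^+ 5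
   + 20 * b * (u + 2) * (u + 3) * (u + 4) * (- c) ^+ 3 + 120 * e * (u + 2) * (- c).
Proof.
rewrite /Q (Qtop c hs hn); last lia.
rewrite (cj c (A := nn.+4.+2) (j := 5)); last lia.
rewrite (cj c (A := nn.+4) (j := 3)); last lia.
rewrite (cj c (A := nn.+2) (j := 1)); last lia.
rewrite binF5d binF3d binF1; fin.
Qed.
End Pow.

Section Alg.
Variable F : realFieldType.

Lemma alg1 (a b c u P d6 d5 d4 d3 q5 q4 q3 : F) :
  P != 0 -> 0 <= u -> a != 0 -> c != 0 -> d4 = 0 -> d3 = 0 ->
  q5 = a * (u + 6) * (- c) -> q5 = d5 * (16 * P) ->
  q4 * 2 = a * (u + 5) * (u + 6) * c ^+ 2 + 2 * b ->
  q4 = d6 * (- (u + 6) * 8 * P) + d4 * (8 * P) ->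
  q3 * 6 = a * (u + 4) * (u + 5) * (u + 6) * (- c) ^+ 3 + 6 * b * (u + 4) * (- c) ->
  q3 = d5 * (- (u + 5) * 4 * P) + d3 * (4 * P) ->
  a = d6 * (32 * P) ->
  (u + 5) * (u + 4) * (4 * c) ^+ 2 = 12.
Proof.
move=> P0 u0 a0 c0 -> -> h5a h5b h4a h4b h3a h3b h6.
have W : 4 * q3 + (u + 5) * q5 = 0 by rewrite h3b h5b; ring.
have hq3 : q3 = (a * (u + 4) * (u + 5) * (u + 6) * (- c) ^+ 3 + 6 * b * (u + 4) * (- c)) / 6.
  by rewrite -h3a; field.
have hb : b = (q4 * 2 - a * (u + 5) * (u + 6) * c ^+ 2) / 2 by rewrite h4a; field.
have hd6 : d6 = a / (32 * P) by rewrite h6; field.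
have T : a * c * (u + 6) * (16 * (u + 5) * (u + 4) * c ^+ 2 - 12) = 12 * (4 * q3 + (u + 5) * q5).
  rewrite hq3 h5a hb h4b hd6; field.
  done.
move: T; rewrite W mulr0 => /eqP; rewrite !mulf_eq0 (negbTE a0) (negbTE c0) /=.
have -> : (u + 6 == 0) = false by apply/negbTE; rewrite gt_eqF //; lra.
rewrite orFb subr_eq0 => /eqP h; rewrite -h; ring.
Qed.

Lemma alg2 (a b e c u P d6 d5 d4 d3 d2 d1 q5 q4 q3 q2 q1 : F) :
  P != 0 -> 0 <= u -> a != 0 -> c != 0 -> d4 = 0 -> d2 = 0 -> d1 = 0 ->
  q5 = a * (u + 6) * (- c) -> q5 = d5 * (16 * P) ->
  q4 * 2 = a * (u + 5) * (u + 6) * c ^+ 2 + 2 * b ->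
  q4 = d6 * (- (u + 6) * 8 * P) + d4 * (8 * P) ->
  q3 * 6 = a * (u + 4) * (u + 5) * (u + 6) * (- c) ^+ 3 + 6 * b * (u + 4) * (- c) ->
  q3 = d5 * (- (u + 5) * 4 * P) + d3 * (4 * P) ->
  q2 * 24 = a * (u + 3) * (u + 4) * (u + 5) * (u + 6) * c ^+ 4 + 12 * b * (u + 3) * (u + 4) * c ^+ 2 + 24 * e ->
  q2 = d6 * ((u + 6) * (u + 3) * P) + d4 * (- (u + 4) * 2 * P) + d2 * (2 * P) ->
  q1 * 120 = a * (u + 2) * (u + 3) * (u + 4) * (u + 5) * (u + 6) * (- c) ^+ 5
   + 20 * b * (u + 2) * (u + 3) * (u + 4) * (- c) ^+ 3 + 120 * e * (u + 2) * (- c) ->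
  q1 = d5 * ((u + 5) * (u + 2) * P / 2) + d3 * (- (u + 3) * P) + d1 * P ->
  a = d6 * (32 * P) ->
  (u + 5) * (u + 2) * ((u + 4) * (u + 3)) * ((4 * c) ^+ 2) ^+ 2
    - 30 * ((u + 4) * (u + 3)) * (4 * c) ^+ 2 + 120 = 0.
Proof.
move=> P0 u0 a0 c0 -> -> -> h5a h5b h4a h4b h3a h3b h2a h2b h1a h1b h6.
have W : 32 * q1 + 8 * (u + 3) * q3 + (u + 5) * (u + 4) * q5 = 0.
  by rewrite h1b h3b h5b; field.
have hq3 : q3 = (a * (u + 4) * (u + 5) * (u + 6) * (- c) ^+ 3 + 6 * b * (u + 4) * (- c)) / 6.
  by rewrite -h3a; field.
have hq1 : q1 = (a * (u + 2) * (u + 3) * (u + 4) * (u + 5) * (u + 6) * (- c) ^+ 5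
   + 20 * b * (u + 2) * (u + 3) * (u + 4) * (- c) ^+ 3 + 120 * e * (u + 2) * (- c)) / 120.
  by rewrite -h1a; field.
have he : e = (q2 * 24 - a * (u + 3) * (u + 4) * (u + 5) * (u + 6) * c ^+ 4 - 12 * b * (u + 3) * (u + 4) * c ^+ 2) / 24.
  by rewrite h2a; field.
have hb : b = (q4 * 2 - a * (u + 5) * (u + 6) * c ^+ 2) / 2 by rewrite h4a; field.
have hd6 : d6 = a / (32 * P) by rewrite h6; field.
set G := (X in X = 0).
have T : a * c * (u + 6) * G = -60 * (32 * q1 + 8 * (u + 3) * q3 + (u + 5) * (u + 4) * q5).
  rewrite /G hq1 hq3 h5a he h2b hb h4b hd6; field.
  done.
move: T; rewrite W mulr0 => /eqP; rewrite !mulf_eq0 (negbTE a0) (negbTE c0) /=.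
have -> : (u + 6 == 0) = false by apply/negbTE; rewrite gt_eqF //; lra.
by rewrite orFb => /eqP.
Qed.
End Alg.
Lemma G1 (p q : {poly int}) : p \is monic -> q != 0 -> Pdiv.Ring.rmodp p q = 0 ->
  (lead_coef q %| zcontents q)%Z.
Proof.
move=> mp q0 r0.
have := Pdiv.ComRing.rdivp_eq q p; rewrite r0 addr0.
set c := _ ^+ _; set h := Pdiv.Ring.rdivp p q => E.
have c0 : c != 0 by rewrite expf_neq0 // lead_coef_eq0.
have hc : c = zcontents h * zcontents q.
  by rewrite -zcontentsM -E zcontentsZ zcontents_monic // mulr1.
have hl : c = lead_coef h * lead_coef q.
  by rewrite -lead_coefM -E lead_coefZ (monicP mp) mulr1.
have : (zcontents h %| lead_coef h)%Z.
  have := dvdz_contents (zcontents h) h; rewrite dvdzz => /esym /polyOverP H.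
  by rewrite lead_coefE; apply: H.
case/dvdzP => t ht.
have zh0 : zcontents h != 0 by apply: contraNneq c0 => h0; rewrite hc h0 mul0r.
apply/dvdzP; exists t.
apply: (mulfI zh0); rewrite -hc hl ht; ring.
Qed.

Section NT.
Variable F : realFieldType.

Lemma intr_injF : injective (intr : int -> F).
Proof. by move=> m n /eqP; rewrite eqr_int => /eqP. Qed.

Lemma size_mapI (s : {poly int}) : size (map_poly (intr : int -> F) s) = size s.
Proof. by apply: size_map_inj_poly => //; exact: intr_injF. Qed.

Lemma rem_root (p q : {poly int}) (z : F) :
  root (map_poly intr p) z -> root (map_poly intr q) z ->
  root (map_poly intr (Pdiv.Ring.rmodp p q)) z.
Proof.
move=> /rootP hp /rootP hq.
have := congr1 (fun s => (map_poly (intr : int -> F) s).[z]) (Pdiv.ComRing.rdivp_eq q p).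
rewrite /= map_polyZ rmorphD rmorphM /= hornerD hornerM hornerZ hp hq !mulr0 add0r.
by move=> h; apply/rootP; rewrite -h.
Qed.

Lemma small_eval (s : {poly int}) (z : F) : (size s <= 2)%N ->
  (map_poly intr s).[z] = (s`_0)%:~R + (s`_1)%:~R * z.
Proof.
move=> hs; rewrite (@horner_coef_wide _ 2%N) ?size_mapI // !big_ord_recr big_ord0 /=.
by rewrite !coef_map /= add0r expr0 expr1 mulr1.
Qed.

Lemma small_eq0 (s : {poly int}) : (size s <= 2)%N -> s`_0 = 0 -> s`_1 = 0 -> s = 0.
Proof.
move=> hs h0 h1; apply/polyP => i; rewrite coef0.
by case: i => [|[|i]] //; rewrite nth_default //; apply: leq_trans hs _.
Qed.

Lemma contents_coef (q : {poly int}) i : (zcontents q %| q`_i)%Z.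
Proof.
have := dvdz_contents (zcontents q) q; rewrite dvdzz => /esym /polyOverP; exact.
Qed.

Lemma quad (p : {poly int}) (z : F) (a b c : int) : p \is monic ->
  root (map_poly intr p) z -> a != 0 ->
  a%:~R * z ^+ 2 + b%:~R * z + c%:~R = 0 ->
  ((a %| b)%Z /\ (a %| c)%Z) \/ exists k : int, z = k%:~R.
Proof.
move=> mp rp a0 hz.
pose q : {poly int} := Poly [:: c; b; a].
have hq : polyseq q = [:: c; b; a] by rewrite (@PolyK _ 0).
have sq : size q = 3%N by rewrite hq.
have q0 : q != 0 by rewrite -size_poly_eq0 sq.
have lq : lead_coef q = a by rewrite lead_coefE sq hq.
have rq : root (map_poly intr q) z.
  apply/rootP; rewrite (@horner_coef_wide _ 3%N) ?size_mapI ?sq //.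
  rewrite !big_ord_recr big_ord0 /= !coef_map hq /= expr0 expr1 add0r -hz; ring.
set r := Pdiv.Ring.rmodp p q.
have rr := rem_root rp rq.
have sr : (size r < 3)%N by rewrite -sq Pdiv.Ring.ltn_rmodp.
have [r0|rn0] := eqVneq r 0.
  left; have := G1 mp q0 r0; rewrite lq => h.
  split; apply: dvdz_trans h _.
    by have := contents_coef q 1; rewrite hq.
  by have := contents_coef q 0; rewrite hq.
right.
have er := small_eval z (_ : (size r <= 2)%N); move: (er ltac:(lia)) => {}er.
have [r10|r1n0] := eqVneq r`_1 0.
  move: rr; rewrite /root er r10 mulr0z mul0r addr0 intr_eq0 => /eqP r00.
  by move: rn0; rewrite (small_eq0 (_ : (size r <= 2)%N) r00 r10) ?eqxx //; lia.
have szr : size r = 2%N.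
  apply/eqP; rewrite eqn_leq -ltnS sr /=; apply: contraNT r1n0; rewrite -leqNgt => h.
  by rewrite nth_default.
set s := Pdiv.Ring.rmodp p r.
have rs := rem_root rp rr.
have ss : (size s < 2)%N by rewrite -szr Pdiv.Ring.ltn_rmodp.
have s1 : s`_1 = 0 by rewrite nth_default.
move: rs; rewrite /root small_eval; last exact: ltnW.
rewrite s1 mulr0z mul0r addr0 intr_eq0 => /eqP s00.
have s0 : s = 0 by apply: small_eq0 => //; exact: ltnW.
have := G1 mp rn0 s0; rewrite lead_coefE szr /= => h.
have := dvdz_trans h (contents_coef r 0); case/dvdzP => t ht.
exists (- t); move: rr; rewrite /root er ht => /eqP.
rewrite intrM => h2.
have nz : (r`_1)%:~R != 0 :> F by rewrite intr_eq0.
have : (r`_1)%:~R * (t%:~R + z) = 0 :> F by rewrite -h2; ring.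
move/eqP; rewrite mulf_eq0 (negbTE nz) /= addrC addr_eq0 => /eqP ->.
by rewrite mulrNz.
Qed.
End NT.

Unset Implicit Arguments.
Lemma algint_sq (F : realFieldType) (x : F) : is_algint x -> is_algint (x ^+ 2).
Proof.
case=> p [mp rp].
have : integralOver (intr : int -> F) (x * x).
  by apply: integral_mul; exists p.
by case=> q mq rq; exists q; rewrite expr2.
Qed.

Lemma L1 (a k : int) : (20 <= a)%R -> (a * k ^+ 2 = 12)%R -> False.
Proof.
move=> ha hk.
have [k0|k0] := eqVneq k 0; first by move: hk; rewrite k0 expr0n mulr0.
have : (1 <= k ^+ 2)%R by rewrite expr2; nia.
nia.
Qed.
Lemma L2 (A B k : int) : (1 <= B)%R -> (54 * B <= A)%R -> (A * k ^+ 2 + (- (30 * B)) * k + 120 = 0)%R -> False.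
Proof.
move=> hB hA h.
have [k0|k0] := lerP k 0.
  have : (0 <= A * k ^+ 2)%R by rewrite expr2; nia.
  have : (0 <= - (30 * B) * k)%R by nia.
  lia.
have : (k <= k ^+ 2)%R by rewrite expr2; nia.
nia.
Qed.

Lemma natZ (F : realFieldType) (n : nat) : ((Posz n)%:~R : F) = n%:R.
Proof. by rewrite -pmulrn. Qed.

Theorem corollary3p3 (F : realFieldType) (R : {poly F}) (delta : F) :
  let Q := R \Po (('X - delta%:P) ^+ 2) in
  let n := (size Q).-1 in
  ((6 <= n)%N -> Ch_zero Q [:: 2%N; 3%N] ->
     delta != 0 -> ~ is_algint (4 * delta)) /\
  ((9 <= n)%N -> Ch_zero Q [:: 2%N; 4%N; 5%N] ->
     delta != 0 -> ~ is_algint (4 * delta)).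
Proof.
move=> Q n.
have hnQ : n = ((size R).-1 * 2)%N by rewrite /n /Q size_comp_poly size_exp_XsubC.
have key : (6 <= n)%N -> exists mm nn, [/\ size R = mm.+4, nn = mm.*2 & n = nn.+4.+2].
  move=> h6; exists ((size R).-1 - 3)%N, (((size R).-1 - 3).*2)%N; split => //; rewrite -?muln2; lia.
have P0 : forall nn, (2 ^+ nn : F) != 0 by move=> nn; rewrite expf_neq0 // pnatr_eq0.
have u0 : forall nn, 0 <= (nn%:R : F) by move=> nn; rewrite ler0n.
have a0 : forall mm, size R = mm.+4 -> R`_mm.+3 != 0.
  move=> mm hs; have : lead_coef R != 0 by rewrite lead_coef_eq0 -size_poly_eq0 hs.
  by rewrite lead_coefE hs.
split.
- move=> h6 [d [hQ hz]] c0 hint.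
  have [mm [nn [hs hnn hn']]] := key h6.
  rewrite /n in hn'; rewrite /cheb_coords hn' in hQ; rewrite hn' in hz.
  have d4 : d nn.+4 = 0 by have := hz 2%N erefl; rewrite subSS subSS subn0.
  have d3 : d nn.+3 = 0 by have := hz 3%N erefl; rewrite !subSS subn0.
  have h6' : R`_mm.+3 = d nn.+4.+2 * (32 * 2 ^+ nn) by rewrite -(P6 delta hs hnn) (C6 hQ).
  have H := alg1 (P0 nn) (u0 nn) (a0 mm hs) c0 d4 d3 (P5 delta hs hnn) (C5 hQ)
     (P4 delta hs hnn) (C4 hQ) (P3 delta hs hnn) (C3 hQ) h6'.
  case: hint => p [mp rp].
  set A := Posz (nn.+4.+1 * nn.+4).
  have hA : (A%:~R : F) = (nn%:R + 5) * (nn%:R + 4) by rewrite natZ natrM -!natr1; ring.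
  have A0 : A != 0 by rewrite /A; apply/eqP; lia.
  have := quad mp rp A0 (_ : A%:~R * (4 * delta) ^+ 2 + 0%:~R * (4 * delta) + (-12)%:~R = 0).
  case.
  + by rewrite hA H mul0r addr0 mulrNz; ring.
  + case=> _; rewrite dvdzE /A abszN /= => /dvdn_leq h.
    have : (nn.+4.+1 * nn.+4 <= 12)%N by exact: h.
    rewrite !mulSn; lia.
  + case=> k hk; move: H; rewrite hk -hA => /eqP.
    rewrite -rmorphXn /= -intrM (_ : 12 = 12%:~R) // eqr_int => /eqP.
    apply: L1; rewrite /A; lia.
- move=> h9 [d [hQ hz]] c0 hint.
  have [mm [nn [hs hnn hn']]] := key (leq_trans (isT : (6 <= 9)%N) h9).
  rewrite /n in hn'; rewrite /cheb_coords hn' in hQ; rewrite hn' in hz.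
  have nn4 : (4 <= nn)%N by move: h9; rewrite /n hn' hnn -muln2; lia.
  have d4 : d nn.+4 = 0 by have := hz 2%N erefl; rewrite subSS subSS subn0.
  have d2 : d nn.+2 = 0 by have := hz 4%N erefl; rewrite !subSS subn0.
  have d1 : d nn.+1 = 0 by have := hz 5%N erefl; rewrite !subSS subn0.
  have h6' : R`_mm.+3 = d nn.+4.+2 * (32 * 2 ^+ nn) by rewrite -(P6 delta hs hnn) (C6 hQ).
  have H := alg2 (P0 nn) (u0 nn) (a0 mm hs) c0 d4 d2 d1 (P5 delta hs hnn) (C5 hQ)
     (P4 delta hs hnn) (C4 hQ) (P3 delta hs hnn) (C3 hQ) (P2 delta hs hnn) (C2 hQ)
     (P1 delta hs hnn) (C1 hQ) h6'.
  case: (algint_sq _ _ hint) => p [mp rp].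
  set B := (nn.+4 * nn.+3)%N.
  set A := Posz (nn.+4.+1 * nn.+2 * B).
  have hA : (A%:~R : F) = (nn%:R + 5) * (nn%:R + 2) * ((nn%:R + 4) * (nn%:R + 3)).
    by rewrite natZ /B !natrM -!natr1; ring.
  have hB : ((- Posz (30 * B))%:~R : F) = - (30 * ((nn%:R + 4) * (nn%:R + 3))).
    by rewrite mulrNz natZ /B !natrM -!natr1; ring.
  have A0 : A != 0 by rewrite /A /B; apply/eqP; lia.
  have := quad mp rp A0 (_ : A%:~R * ((4 * delta) ^+ 2) ^+ 2 + (- Posz (30 * B))%:~R * (4 * delta) ^+ 2 + (Posz 120)%:~R = 0).
  case.
  + by rewrite hA hB natZ -H; ring.
  + case=> h _; move: h; rewrite dvdzE /A abszN /= => /dvdn_leq h.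
    have B0 : (0 < B)%N by rewrite /B muln_gt0.
    move: (h (ltac:(rewrite muln_gt0; exact/andP))).
    rewrite leq_pmul2r // !mulSn; lia.
  + case=> k hk; move: H; rewrite hk -hA /=.
    have -> : 30 * ((nn%:R + 4) * (nn%:R + 3)) = (Posz (30 * B))%:~R :> F.
      by rewrite natZ /B !natrM -!natr1; ring.
    have B1 : (1 <= Posz B)%R by rewrite /B; lia.
    have AB : (54 * Posz B <= A)%R.
      rewrite /A PoszM; apply: ler_wpM2r; first lia.
      rewrite !mulSn; lia.
    move=> hh; apply: (@L2 A B k B1 AB); apply/eqP; rewrite -(intr_eq0 F); apply/eqP; rewrite -hh.
    rewrite !intrD !intrM -!rmorphXn /= mulrNz intrM.
    rewrite -!pmulrn. ring.
Qed.
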